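(* Let $A=(a_0,\dots,a_{n-1})$ be an array of pairwise distinct numbers, $k_1<k_2$ positive integers. Consider an iteration of Cover-approx$(A,k_1,k_2)$ whose computed suffix is $(b,c)$, and suppose the next iteration computes the prefix $(b,d)$. Let $Y=(y_1,\dots,y_{k_1})$ be the lexicographically minimal (with respect to the sequence of positions) increasing subsequence of length $k_1$ of $(a_b,\dots,a_c)$, and $X'=(x'_1,\dots,x'_{k_2})$ the lexicographically minimal increasing subsequence of length $k_2$ of $(a_b,\dots,a_d)$, where $y_t,x'_t$ denote positions. Then $x'_i\ge y_i$ for all $1\le i\le k_1$.
   Context: For $i\le j$, $\mathrm{LIS}(i,j)$ denotes the length of a longest increasing subsequence of $(a_i,\dots,a_j)$. Cover-approx$(A,k_1,k_2)$: set $C=\emptyset$, $i=0$. Repeat: let $j$ be the smallest index $\ge i$ with $\mathrm{LIS}(i,j)\ge k_2$; if none exists, return $C$. Let $q$ be the largest index $\le j$ with $\mathrm{LIS}(q,j)\ge k_1$. Add the segment $(q,j,L)$ to $C$, where $L$ is a longest increasing subsequence of $(a_q,\dots,a_j)$, and set $i=q$. In an iteration, $(i,j)$ is called the computed prefix and $(q,j)$ the computed suffix. *)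

(* Defs.v *)
From mathcomp Require Import all_boot all_order all_algebra.
Set Implicit Arguments. Unset Strict Implicit. Unset Printing Implicit Defensive.
Import Order.TTheory GRing.Theory Num.Theory.

Section Defs.
Variable R : realDomainType.
Variable A : seq R.

Definition a (p : nat) : R := nth 0%R A p.

Definition inc_sub (lo hi : nat) (s : seq nat) : Prop :=
  sorted ltn s /\
  (forall p, p \in s -> (lo <= p) && (p <= hi) && (p < size A)) /\
  sorted (fun p q => (a p < a q)%R) s.

Definition lis_ge (lo hi k : nat) : Prop :=
  exists s, inc_sub lo hi s /\ k <= size s.

Definition lex_lt (s t : seq nat) : Prop :=
  exists m, m < size s /\ take m s = take m t /\ nth 0 s m < nth 0 t m.

Definition lexmin_inc_sub (k lo hi : nat) (s : seq nat) : Prop :=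
  inc_sub lo hi s /\ size s = k /\
  forall t, inc_sub lo hi t -> size t = k -> s = t \/ lex_lt s t.

Variables k1 k2 : nat.

(* j is the end of the computed prefix (i, j): smallest j >= i with
   LIS(i, j) >= k2 *)
Definition computed_prefix (i j : nat) : Prop :=
  i <= j < size A /\ lis_ge i j k2 /\
  forall j', i <= j' < j -> ~ lis_ge i j' k2.

(* q is the start of the computed suffix (q, j): largest q <= j with
   LIS(q, j) >= k1 *)
Definition computed_suffix (j q : nat) : Prop :=
  q <= j /\ lis_ge q j k1 /\
  forall q', q < q' <= j -> ~ lis_ge q' j k1.

(* values taken by the variable i at the start of an iteration of
   Cover-approx(A, k1, k2) *)
Inductive iter_start : nat -> Prop :=
| iter_start0 : iter_start 0
| iter_startS i j q : iter_start i -> computed_prefix i j ->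
    computed_suffix j q -> iter_start q.

End Defs.

(* Main.v *)
Require Import Defs.
From mathcomp Require Import all_boot all_order all_algebra.
From mathcomp Require Import zify.
Import Order.TTheory GRing.Theory Num.Theory.
Set Implicit Arguments. Unset Strict Implicit.

Lemma incP (R : realDomainType) (A : seq R) lo hi s :
  inc_sub A lo hi s <->
  (forall i, i < size s -> (lo <= nth 0 s i <= hi) && (nth 0 s i < size A)) /\
  (forall i, i.+1 < size s -> nth 0 s i < nth 0 s i.+1 /\ (a A (nth 0 s i) < a A (nth 0 s i.+1))%R).
Proof.
split.
- case=> [s1 [s2 s3]]; split.
  + by move=> i Hi; apply: s2; apply: mem_nth.
  + move=> i Hi; split.
    * by move/sortedP: s1; apply.
    * by move/(sortedP 0): s3; apply.
- case=> [h1 h2]; split; [|split].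
  + by apply/(sortedP 0) => i Hi; case: (h2 i Hi).
  + move=> p /(nthP 0) [i Hi <-]; exact: h1.
  + by apply/(sortedP 0) => i Hi; case: (h2 i Hi).
Qed.

Lemma inc_mono (R : realDomainType) (A : seq R) lo hi s i j :
  inc_sub A lo hi s -> i < j -> j < size s ->
  nth 0 s i < nth 0 s j /\ (a A (nth 0 s i) < a A (nth 0 s j))%R.
Proof.
case=> [s1 [s2 s3]] Hij Hj.
have Hi : i < size s by apply: ltn_trans Hj.
split.
- by apply: (sorted_ltn_nth ltn_trans 0 s1).
- have tr : transitive (fun p q : nat => (a A p < a A q)%R).
    by move=> y x z; apply: lt_trans.
  by apply: (sorted_ltn_nth tr 0 s3).
Qed.

Lemma inc_le (R : realDomainType) (A : seq R) lo hi s i j :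
  inc_sub A lo hi s -> i <= j -> j < size s -> nth 0 s i <= nth 0 s j.
Proof.
move=> H; rewrite leq_eqVlt => /orP [/eqP -> //| Hij] Hj.
by apply: ltnW; case: (inc_mono H Hij Hj).
Qed.

Lemma inc_bnd (R : realDomainType) (A : seq R) lo hi s i :
  inc_sub A lo hi s -> i < size s -> [/\ lo <= nth 0 s i, nth 0 s i <= hi & nth 0 s i < size A].
Proof.
case/incP=> [h1 _] Hi; have := h1 i Hi.
by case/andP=> /andP [-> ->] ->.
Qed.

Lemma inc_mk (R : realDomainType) (A : seq R) lo hi (f : nat -> nat) n :
  (forall i, i < n -> [/\ lo <= f i, f i <= hi & f i < size A]) ->
  (forall i, i.+1 < n -> f i < f i.+1 /\ (a A (f i) < a A (f i.+1))%R) ->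
  inc_sub A lo hi (mkseq f n).
Proof.
move=> h1 h2; apply/incP; rewrite size_mkseq; split.
- move=> i Hi; rewrite nth_mkseq //; case: (h1 i Hi) => -> -> ->; by [].
- move=> i Hi; rewrite !nth_mkseq //; [exact: h2 | exact: ltn_trans Hi].
Qed.

Lemma lex_contra (R : realDomainType) (A : seq R) k lo hi s w m :
  lexmin_inc_sub A k lo hi s -> inc_sub A lo hi w -> size w = k -> m < k ->
  (forall j, j < m -> nth 0 w j = nth 0 s j) -> nth 0 w m < nth 0 s m -> False.
Proof.
case=> [_ [Hs Hmin]] Hw Hsw Hm Heq Hlt.
case: (Hmin w Hw Hsw) => [E | [m' [Hm' [Ht Hl]]]].
  by move: Hlt; rewrite E ltnn.
case: (ltngtP m' m) => H.
- by move: Hl; rewrite Heq // ltnNge leqnn.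
- have : nth 0 (take m' s) m = nth 0 (take m' w) m by rewrite Ht.
  rewrite !nth_take // => E; by move: Hlt; rewrite E ltnn.
- by subst m'; move: Hlt; rewrite ltnNge (ltnW Hl).
Qed.

Lemma N1 (R : realDomainType) (A : seq R) k1 b c s :
  0 < k1 -> computed_suffix A k1 c b -> inc_sub A b c s -> k1 < size s -> False.
Proof.
move=> Hk [_ [_ Hq]] Hs Hsz.
have B0 := inc_bnd Hs (ltn_trans Hk Hsz).
have B1 := inc_bnd Hs Hsz.
have M01 : nth 0 s 0 < nth 0 s 1 by case: (inc_mono Hs (ltn0Sn 0) (leq_ltn_trans Hk Hsz)).
apply: (Hq b.+1).
  case: B0 => ? _ _; have := inc_bnd Hs (leq_ltn_trans Hk Hsz); case=> _ ? _; apply/andP; split; lia.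
exists (mkseq (fun i => nth 0 s i.+1) k1); split; last by rewrite size_mkseq.
apply: inc_mk.
- move=> i Hi; have Hi' : i.+1 < size s by apply: leq_ltn_trans Hsz.
  case: (inc_bnd Hs Hi') => _ -> ->; split => //.
  case: B0 => ? _ _; case: (inc_mono Hs (ltn0Sn i) Hi') => ? _; lia.
- move=> i Hi; apply: inc_mono Hs _ _ => //; lia.
Qed.

Lemma N2 (R : realDomainType) (A : seq R) k2 b d s : 0 < k2 ->
  computed_prefix A k2 b d -> inc_sub A b d s -> k2 < size s -> False.
Proof.
move=> Hk [_ [_ Hj]] Hs Hsz.
have Bk := inc_bnd Hs Hsz.
have B0 := inc_bnd Hs (leq_ltn_trans (leq0n k2) Hsz).
have M i : i < k2 -> nth 0 s i < nth 0 s k2 by move=> Hi; case: (inc_mono Hs Hi Hsz).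
case: k2 Hk Hj Hsz Bk M => [//|k2] _ Hj Hsz Bk M.
apply: (Hj d.-1).
  case: B0 => ? _ _; case: Bk => _ ? _; have := M 0 (ltn0Sn _); lia.
exists (mkseq (nth 0 s) k2.+1); split; last by rewrite size_mkseq.
apply: inc_mk.
- move=> i Hi; have Hi' : i < size s by apply: ltn_trans Hsz.
  case: (inc_bnd Hs Hi') => -> _ ->; split => //.
  case: Bk => _ ? _; have := M i Hi; lia.
- move=> i Hi; apply: inc_mono Hs _ _ => //; lia.
Qed.

Lemma first_true (P : pred nat) t n : t <= n -> P n ->
  exists J, [/\ t <= J <= n, P J & forall j, t <= j < J -> ~~ P j].
Proof.
move=> Htn Pn.
have exP : exists j, (t <= j) && P j by exists n; rewrite Htn Pn.
case: (ex_minnP exP) => J /andP [HtJ PJ] Hmin.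
exists J; split => //.
- by rewrite HtJ /=; apply: Hmin; rewrite Htn Pn.
- move=> j /andP [Htj HjJ]; apply/negP => Pj.
  by have := Hmin j; rewrite Htj Pj => /(_ isT); rewrite leqNgt HjJ.
Qed.

Lemma first_diff (f g : nat -> nat) n :
  (forall s, s < n -> f s = g s) \/
  exists s0, [/\ s0 < n, (forall s, s < s0 -> f s = g s) & f s0 != g s0].
Proof.
elim: n => [|n [IH|[s0 [H1 H2 H3]]]].
- by left.
- case: (eqVneq (f n) (g n)) => E.
  + left => s; rewrite ltnS leq_eqVlt => /orP [/eqP -> //|]; exact: IH.
  + by right; exists n; split.
- by right; exists s0; split => //; apply: ltn_trans H1 _.
Qed.

Lemma a_inj (R : realDomainType) (A : seq R) p q :
  uniq A -> p < size A -> q < size A -> a A p = a A q -> p = q.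
Proof.
move=> Hu Hp Hq E; apply/eqP; rewrite -(nth_uniq (0%R:R) Hp Hq Hu); apply/eqP; exact: E.
Qed.

Theorem lemma4 (R : realDomainType) (A : seq R) (k1 k2 : nat)
  (i b c d : nat) (Y X' : seq nat) :
  uniq A -> 0 < k1 -> k1 < k2 ->
  iter_start A k1 k2 i ->
  computed_prefix A k2 i c ->
  computed_suffix A k1 c b ->
  computed_prefix A k2 b d ->
  lexmin_inc_sub A k1 b c Y ->
  lexmin_inc_sub A k2 b d X' ->
  forall t, t < k1 -> nth 0 Y t <= nth 0 X' t.
Proof.
move=> Hu Hk1 Hk12 _ _ Hsuf Hpre HY HX.
have Hk2 : 0 < k2 by lia.
have [HYi [HYs _]] := HY. have [HXi [HXs _]] := HX.
have YB j : j < k1 -> [/\ b <= nth 0 Y j, nth 0 Y j <= c & nth 0 Y j < size A].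
  by move=> Hj; apply: inc_bnd HYi _; rewrite HYs.
have XB j : j < k2 -> [/\ b <= nth 0 X' j, nth 0 X' j <= d & nth 0 X' j < size A].
  by move=> Hj; apply: inc_bnd HXi _; rewrite HXs.
have YM j l : j < l -> l < k1 -> nth 0 Y j < nth 0 Y l /\ (a A (nth 0 Y j) < a A (nth 0 Y l))%R.
  by move=> H1 H2; apply: inc_mono HYi H1 _; rewrite HYs.
have XM j l : j < l -> l < k2 -> nth 0 X' j < nth 0 X' l /\ (a A (nth 0 X' j) < a A (nth 0 X' l))%R.
  by move=> H1 H2; apply: inc_mono HXi H1 _; rewrite HXs.
have XL j l : j <= l -> l < k2 -> nth 0 X' j <= nth 0 X' l.
  by move=> H1 H2; apply: inc_le HXi H1 _; rewrite HXs.
have YL j l : j <= l -> l < k1 -> nth 0 Y j <= nth 0 Y l.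
  by move=> H1 H2; apply: inc_le HYi H1 _; rewrite HYs.
have V3 : c < nth 0 X' k1.
  rewrite ltnNge; apply/negP => Hle.
  apply: (N1 Hk1 Hsuf (s := mkseq (nth 0 X') k1.+1)); last by rewrite size_mkseq.
  apply: inc_mk.
  - move=> j Hj; have Hj2 : j < k2 by lia.
    case: (XB j Hj2) => ? _ ?; split => //.
    have := XL j k1; lia.
  - move=> j Hj; apply: XM => //; lia.
have V1 j : j < k1 -> nth 0 X' j < nth 0 Y j -> (a A (nth 0 Y j) < a A (nth 0 X' j))%R.
  move=> Hj Hxy.
  have Hj2 : j < k2 by lia.
  case: (ltgtP (a A (nth 0 Y j)) (a A (nth 0 X' j))) => // Hv; last first.
    case: (YB j Hj) => _ _ ?; case: (XB j Hj2) => _ _ ?.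
    by move/(a_inj Hu) : Hv => /(_ _ _) E; move: Hxy; rewrite E // ltnn.
  exfalso.
  apply: (N1 Hk1 Hsuf (s := mkseq (fun l => if l <= j then nth 0 X' l else nth 0 Y l.-1) k1.+1)); last by rewrite size_mkseq.
  apply: inc_mk.
  - move=> l Hl; case: (leqP l j) => Hlj.
    + case: (XB l (leq_ltn_trans Hlj Hj2)) => ? _ ?; split => //.
      case: (YB j Hj) => _ ? _; have := XL l j Hlj Hj2; lia.
    + apply: YB; lia.
  - move=> l Hl; have [Hlj|Hlj|->] := ltngtP l j.
    + apply: XM => //; lia.
    + apply: YM; lia.
    + by split.
have V2 j : j < k1 -> nth 0 Y j < nth 0 X' j -> (a A (nth 0 X' j) < a A (nth 0 Y j))%R.
  move=> Hj Hxy.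
  have Hj2 : j < k2 by lia.
  case: (ltgtP (a A (nth 0 X' j)) (a A (nth 0 Y j))) => // Hv; last first.
    case: (YB j Hj) => _ _ ?; case: (XB j Hj2) => _ _ ?.
    by move/(a_inj Hu) : Hv => /(_ _ _) E; move: Hxy; rewrite E // ltnn.
  exfalso.
  apply: (N2 Hk2 Hpre (s := mkseq (fun l => if l <= j then nth 0 Y l else nth 0 X' l.-1) k2.+1)); last by rewrite size_mkseq.
  apply: inc_mk.
  - move=> l Hl; case: (leqP l j) => Hlj.
    + case: (YB l (leq_ltn_trans Hlj Hj)) => ? _ ?; split => //.
      case: (XB j Hj2) => _ ? _; have := YL l j Hlj Hj; lia.
    + apply: XB; lia.
  - move=> l Hl; have [Hlj|Hlj|->] := ltngtP l j.
    + apply: YM => //; lia.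
    + apply: XM; lia.
    + by split.
have cd : c < d.
  case: (XB k1 Hk12) => _ ? _; lia.
elim/ltn_ind => t IH Ht.
rewrite leqNgt; apply/negP => Hlt.
have [J [/andP [HtJ HJk] PJ HJ]] := first_true
  (P := fun j => (k1 <= j) || (nth 0 Y j <= nth 0 X' j)) (ltnW Ht) (introT orP (or_introl (leqnn k1))).
have Hstrict l : t <= l < J -> l < k1 /\ nth 0 X' l < nth 0 Y l.
  move=> Hl; have := HJ l Hl; rewrite negb_or -ltnNge -ltnNge => /andP [-> ->]; by [].
have HtJ' : t < J.
  rewrite ltn_neqAle HtJ andbT; apply/eqP => E; subst J.
  by move: PJ; rewrite leqNgt Ht /= leqNgt Hlt.
have HJ1 : t <= J.-1 < J by lia.
have [Hs1 Hs2] := Hstrict _ HJ1.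
have [Heq|[s0 [Hs0 Heq Hne]]] := first_diff (nth 0 Y) (nth 0 X') t.
-
  apply: (lex_contra HY (w := mkseq (fun l => if l < J then nth 0 X' l else nth 0 Y l) k1) _ _ Ht).
  + apply: inc_mk.
    * move=> l Hl; case: (ltnP l J) => HlJ; last exact: YB.
      case: (XB l (ltn_trans Hl Hk12)) => ? _ ?; split => //.
      case: (YB _ Hs1) => _ ? _; have := XL l J.-1; lia.
    * move=> l Hl; have [H|H|H] := ltngtP l.+1 J.
      -- apply: XM; lia.
      -- apply: YM; lia.
      -- subst J; rewrite /= in Hs1 Hs2.
         have HJk1 : l.+1 < k1 by lia.
         have PJ' : nth 0 Y l.+1 <= nth 0 X' l.+1.
           by move: PJ; rewrite leqNgt HJk1.
         have [Hy1 Hy2] := YM l l.+1 (ltnSn l) HJk1.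
         have [Hx1 Hx2] := XM l l.+1 (ltnSn l) (ltn_trans HJk1 Hk12).
         split; first by lia.
         apply: (lt_le_trans Hx2).
         move: PJ'; rewrite leq_eqVlt => /orP [/eqP ->//|Hlt2].
         exact: ltW (V2 _ HJk1 Hlt2).
  + by rewrite size_mkseq.
  + move=> j Hj; rewrite nth_mkseq; last by lia.
    have -> : j < J by lia.
    by rewrite Heq.
  + by rewrite nth_mkseq // HtJ'.
-
  have Hys0 : nth 0 Y s0 < nth 0 X' s0.
    by rewrite ltn_neqAle Hne IH //; lia.
  apply: (lex_contra HX (w := mkseq (fun l => if l < J then nth 0 Y l else nth 0 X' l) k2) _ _ (m := s0)).
  + apply: inc_mk.
    * move=> l Hl; case: (ltnP l J) => HlJ; last exact: XB.
      case: (YB l (leq_trans HlJ HJk)) => ? ? ?; split => //; lia.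
    * move=> l Hl; have [H|H|H] := ltngtP l.+1 J.
      -- apply: YM; lia.
      -- apply: XM; lia.
      -- subst J; rewrite /= in Hs1 Hs2.
         have [Hx1 Hx2] := XM l l.+1 (ltnSn l) (leq_ltn_trans HJk Hk12) .
         split; last exact: lt_trans (V1 _ Hs1 Hs2) Hx2.
         case: (ltnP l.+1 k1) => HJk1.
           have [Hy1 _] := YM l l.+1 (ltnSn l) HJk1.
           have PJ' : nth 0 Y l.+1 <= nth 0 X' l.+1.
             by move: PJ; rewrite leqNgt HJk1.
           lia.
         have Ek : l.+1 = k1 by lia.
         case: (YB l Hs1) => _ ? _; rewrite Ek; lia.
  + by rewrite size_mkseq.
  + lia.
  + move=> j Hj; rewrite nth_mkseq; last by lia.
    have -> : j < J by lia.
    by rewrite Heq.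
  + rewrite nth_mkseq; last by lia.
    by have -> : s0 < J by lia.
Qed.
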